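(* Let $n\ge2$, let $\mathsf r=[r_1,\dots,r_{2n-2}]$ be a tree-like factorization of $\lambda_n$, and let $k\in\{1,\dots,n-1\}$. Then exactly two of the reflections $r_1,\dots,r_{2n-2}$ increase $k$, namely the first and the last reflection in the sequence having an endpoint congruent to $k$ modulo $n$ (i.e. expressible as $(\!(a,b)\!)$ with $a\equiv k$ or $b\equiv k \pmod n$). Moreover there is an integer $b_k$ such that: if $b_k>k$, these two reflections are $(\!(b_k-n,k)\!)$ (the earlier one) and $(\!(k,b_k)\!)$ (the later one); if $b_k<k$, they are $(\!(b_k,k)\!)$ (the earlier one) and $(\!(k-n,b_k)\!)$ (the later one).
   Context: The affine symmetric group $\widetilde S_n$ is the group, under composition $(vw)(k)=v(w(k))$, of bijections $w:\mathbb Z\to\mathbb Z$ with $w(i+n)=w(i)+n$ and $\sum_{i=1}^n w(i)=\binom{n+1}{2}$. For $i\not\equiv j\pmod n$, $(\!(i,j)\!)$ is the affine reflection interchanging $i+kn$ and $j+kn$ for all $k\in\mathbb Z$; $(\!(i,j)\!)=(\!(j,i)\!)=(\!(i+kn,j+kn)\!)$. Let $\lambda_n$ be the element with $\lambda_n(k)=k+n$ for $k\not\equiv0\pmod n$ and $\lambda_n(k)=k-n(n-1)$ for $k\equiv 0\pmod n$; its reflection length is $2n-2$. $\textsc{fact}(\lambda_n)$ is the set of sequences $[r_1,\dots,r_{2n-2}]$ of reflections with $r_1\cdots r_{2n-2}=\lambda_n$. Such a sequence is tree-like if one can write $r_k=(\!(a_{k-1},b_k)\!)$ with integers $a_{k-1}<b_k$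 ($1\le k\le 2n-2$) and $a_k\equiv b_k\pmod n$ ($1\le k\le 2n-3$). A reflection $r_\ell$ of $\mathsf r$ increases (resp. decreases) an integer $k$ if $r_\ell r_{\ell+1}\cdots r_{2n-2}(k)>r_{\ell+1}\cdots r_{2n-2}(k)$ (resp. $<$), where the empty product is the identity. *)

(* Defs.v *)
From Stdlib Require Import ZArith Arith Lia.
Open Scope Z_scope.

(* The affine reflection ((i,j)) in the affine symmetric group on n letters:
   it interchanges i + t n and j + t n for all t (assumes i, j not congruent mod n). *)
Definition refl (n i j : Z) : Z -> Z :=
  fun x => if Z.eqb (x mod n) (i mod n) then x + (j - i)
           else if Z.eqb (x mod n) (j mod n) then x + (i - j)
           else x.

Definition is_refl (n : Z) (f : Z -> Z) : Prop :=
  exists i j, i mod n <> j mod n /\ forall x, f x = refl n i j x.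

Definition is_refl_ij (n : Z) (f : Z -> Z) (i j : Z) : Prop :=
  i mod n <> j mod n /\ forall x, f x = refl n i j x.

Definition lam (n : Z) : Z -> Z :=
  fun x => if Z.eqb (x mod n) 0 then x - n * (n - 1) else x + n.

(* prodseg r l c = r_l o r_(l+1) o ... o r_(l+c-1)  (composition (vw)(k)=v(w(k))),
   the empty product being the identity. *)
Fixpoint prodseg (r : nat -> Z -> Z) (l : nat) (c : nat) : Z -> Z :=
  match c with
  | O => fun x => x
  | S c' => fun x => r l (prodseg r (S l) c' x)
  end.

Definition is_fact_lam (n : nat) (r : nat -> Z -> Z) : Prop :=
  (forall l, (1 <= l <= 2 * n - 2)%nat -> is_refl (Z.of_nat n) (r l)) /\
  (forall x, prodseg r 1 (2 * n - 2) x = lam (Z.of_nat n) x).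

Definition tree_like (n : nat) (r : nat -> Z -> Z) : Prop :=
  exists a b : nat -> Z,
    (forall k, (1 <= k <= 2 * n - 2)%nat ->
       is_refl_ij (Z.of_nat n) (r k) (a (k - 1)%nat) (b k) /\ a (k - 1)%nat < b k) /\
    (forall k, (1 <= k <= 2 * n - 3)%nat ->
       a k mod Z.of_nat n = b k mod Z.of_nat n).

(* r_l increases x: r_l r_(l+1) ... r_m (x) > r_(l+1) ... r_m (x), m = 2n-2. *)
Definition increases (n : nat) (r : nat -> Z -> Z) (l : nat) (x : Z) : Prop :=
  prodseg r l (2 * n - 2 + 1 - l) x > prodseg r (S l) (2 * n - 2 - l) x.

Definition has_endpoint (n : Z) (f : Z -> Z) (k : Z) : Prop :=
  exists a b, is_refl_ij n f a b /\ (a mod n = k mod n \/ b mod n = k mod n).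

(* Main.v *)
Require Import Defs.
From Stdlib Require Import ZArith Arith Lia List Classical.
Open Scope Z_scope.

Lemma mod_shift N y i j : y mod N = i mod N -> (y + (j - i)) mod N = j mod N.
Proof. intros H. rewrite Zplus_mod, H, <- Zplus_mod. replace (i + (j - i)) with j by ring. reflexivity. Qed.

Lemma refl_c1 N i j y : y mod N = i mod N -> refl N i j y = y + (j - i).
Proof. intros H. unfold refl. rewrite H, Z.eqb_refl. reflexivity. Qed.
Lemma refl_c2 N i j y : y mod N <> i mod N -> y mod N = j mod N -> refl N i j y = y + (i - j).
Proof. intros H1 H2. unfold refl. destruct (Z.eqb_spec (y mod N) (i mod N)); [contradiction|].
  rewrite H2, Z.eqb_refl. reflexivity. Qed.
Lemma refl_c3 N i j y : y mod N <> i mod N -> y mod N <> j mod N -> refl N i j y = y.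
Proof. intros H1 H2. unfold refl. destruct (Z.eqb_spec (y mod N) (i mod N)); [contradiction|].
  destruct (Z.eqb_spec (y mod N) (j mod N)); [contradiction|]. reflexivity. Qed.

Lemma refl_res N i j y : refl N i j y mod N =
  if Z.eqb (y mod N) (i mod N) then j mod N else if Z.eqb (y mod N) (j mod N) then i mod N else y mod N.
Proof.
  destruct (Z.eqb_spec (y mod N) (i mod N)) as [E1|E1].
  - rewrite refl_c1 by exact E1. apply mod_shift; exact E1.
  - destruct (Z.eqb_spec (y mod N) (j mod N)) as [E2|E2].
    + rewrite refl_c2 by assumption. apply mod_shift; exact E2.
    + rewrite refl_c3 by assumption. reflexivity.
Qed.

Lemma refl_inj N i j y y' : i mod N <> j mod N -> y mod N <> y' mod N ->
  refl N i j y mod N <> refl N i j y' mod N.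
Proof.
  intros Hij Hy. rewrite !refl_res.
  destruct (Z.eqb_spec (y mod N) (i mod N)); destruct (Z.eqb_spec (y mod N) (j mod N));
  destruct (Z.eqb_spec (y' mod N) (i mod N)); destruct (Z.eqb_spec (y' mod N) (j mod N));
  intro E; congruence.
Qed.

Lemma refl_congr N i j i' j' x : i mod N = i' mod N -> j mod N = j' mod N -> j - i = j' - i' ->
  refl N i j x = refl N i' j' x.
Proof. intros H1 H2 H3. unfold refl. rewrite H1, H2.
  destruct (x mod N =? i' mod N); [lia|]. destruct (x mod N =? j' mod N); lia. Qed.

Lemma refl_moves N i j y : i mod N <> j mod N -> (y mod N = i mod N \/ y mod N = j mod N) ->
  refl N i j y <> y.
Proof.
  intros Hij [H|H].
  - rewrite refl_c1 by exact H. intro E. apply Hij. f_equal. lia.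
  - rewrite refl_c2 by congruence. intro E. apply Hij. f_equal. lia.
Qed.

Lemma endpoint_moves N f k y : has_endpoint N f k -> y mod N = k mod N -> f y <> y.
Proof.
  intros [i [j [[Hij Hf] Hk]]] Hy. rewrite Hf. apply refl_moves; [exact Hij|].
  destruct Hk; [left|right]; congruence.
Qed.

Lemma desc_ind (P : nat -> Prop) (m : nat) : P m ->
  (forall l, (1 <= l < m)%nat -> P (S l) -> P l) -> forall l, (1 <= l <= m)%nat -> P l.
Proof. intros Hm Hs l Hl. remember (m - l)%nat as t eqn:Ht. revert l Hl Ht.
  induction t; intros l Hl Ht.
  - replace l with m by lia. exact Hm.
  - apply Hs; [lia|]. apply IHt; lia. Qed.

Lemma find_last (P : nat -> Prop) (hi : nat) : (exists l, (1 <= l <= hi)%nat /\ P l) ->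
  exists L, (1 <= L <= hi)%nat /\ P L /\ forall l, (L < l <= hi)%nat -> ~ P l.
Proof. induction hi as [|hi IH]; intros [l [Hl Pl]].
 - lia.
 - destruct (classic (P (S hi))) as [HP|HP].
   + exists (S hi). split; [lia|]. split; [exact HP|]. intros; lia.
   + destruct IH as [L [HL [PL Hn]]].
     * exists l. split; [|exact Pl]. destruct (Nat.eq_dec l (S hi)); [subst; contradiction|lia].
     * exists L. split; [lia|]. split; [exact PL|]. intros l' Hl'.
       destruct (Nat.eq_dec l' (S hi)); [subst; exact HP|]. apply Hn; lia.
Qed.

Lemma pigeon (K m : nat) (P : nat -> nat -> Prop) :
  (m <= 2*K)%nat ->
  (forall k1 k2 l, (1 <= k1 <= K)%nat -> (1 <= k2 <= K)%nat -> P k1 l -> P k2 l -> k1 = k2) ->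
  (forall k l, P k l -> (1 <= l <= m)%nat) ->
  (forall k, (1 <= k <= K)%nat -> exists l1 l2, l1 <> l2 /\ P k l1 /\ P k l2) ->
  forall k, (1 <= k <= K)%nat -> forall l1 l2 l3, P k l1 -> P k l2 -> P k l3 -> l1 <> l2 ->
  l3 = l1 \/ l3 = l2.
Proof.
  intros Hm Hdis Hrng Hex k Hk l1 l2 l3 P1 P2 P3 H12.
  destruct (Nat.eq_dec l3 l1) as [|H31]; [left; assumption|].
  destruct (Nat.eq_dec l3 l2) as [|H32]; [right; assumption|].
  exfalso.
  assert (Hb : forall K', (K' <= K)%nat -> exists lst, NoDup lst /\
     (forall x, In x lst -> exists k', (1 <= k' <= K')%nat /\ P k' x) /\
     (2*K' <= length lst)%nat /\ ((k <= K')%nat -> (2*K'+1 <= length lst)%nat)).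
  { induction K' as [|K' IH]; intros HK'.
    - exists nil. split; [constructor|]. split; [intros x []|]. simpl; split; lia.
    - destruct IH as [lst [Hnd [Hin [Hl1 Hl2]]]]; [lia|].
      assert (Hnew : exists nw, NoDup nw /\ (forall x, In x nw -> P (S K') x) /\
                (2 <= length nw)%nat /\ (S K' = k -> (3 <= length nw)%nat)).
      { destruct (Nat.eq_dec (S K') k) as [E|E].
        - exists (l1 :: l2 :: l3 :: nil). subst k. split.
          + constructor; [simpl; intuition congruence|].
            constructor; [simpl; intuition congruence|].
            constructor; [simpl; intuition congruence|constructor].
          + split; [intros x Hx; simpl in Hx; destruct Hx as [<-|[<-|[<-|[]]]]; assumption|].
            simpl; split; lia.
        - destruct (Hex (S K')) as [u [v [Huv [Pu Pv]]]]; [lia|].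
          exists (u :: v :: nil). split.
          + constructor; [simpl; intuition congruence|]. constructor; [simpl; intuition congruence|constructor].
          + split; [intros x Hx; simpl in Hx; destruct Hx as [<-|[<-|[]]]; assumption|].
            simpl; split; [lia| intro; congruence]. }
      destruct Hnew as [nw [Hnd' [Hin' [Hn1 Hn2]]]].
      exists (nw ++ lst). split; [|split; [|split]].
      + apply NoDup_app; [exact Hnd'|exact Hnd|]. intros x Hx1 Hx2.
        destruct (Hin x Hx2) as [k' [Hk' Pk']].
        assert (k' = S K') by (apply (Hdis k' (S K') x); [lia|lia|exact Pk'|exact (Hin' x Hx1)]).
        lia.
      + intros x Hx. apply in_app_or in Hx. destruct Hx as [Hx|Hx].
        * exists (S K'). split; [lia|]. apply Hin'; exact Hx.
        * destruct (Hin x Hx) as [k' [Hk' Pk']]. exists k'. split; [lia|exact Pk'].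
      + rewrite length_app. lia.
      + intros Hkk. rewrite length_app. destruct (Nat.eq_dec (S K') k) as [E|E].
        * specialize (Hn2 E). lia.
        * specialize (Hl2 ltac:(lia)). lia. }
  destruct (Hb K (le_n K)) as [lst [Hnd [Hin [_ Hl2]]]].
  specialize (Hl2 ltac:(lia)).
  assert (Hinc : incl lst (seq 1 m)).
  { intros x Hx. destruct (Hin x Hx) as [k' [_ Pk']]. apply in_seq. specialize (Hrng _ _ Pk'). lia. }
  pose proof (NoDup_incl_length Hnd Hinc) as HL. rewrite length_seq in HL. lia.
Qed.
Definition pos (n : nat) (r : nat -> Z -> Z) (x : Z) (l : nat) : Z := prodseg r l (2*n-2+1-l) x.

Definition Hyp (n : nat) (r : nat -> Z -> Z) (a b : nat -> Z) : Prop :=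
  (2 <= n)%nat /\
  (forall l, (1 <= l <= 2*n-2)%nat -> a (l-1)%nat mod Z.of_nat n <> b l mod Z.of_nat n /\
      (forall x, r l x = refl (Z.of_nat n) (a (l-1)%nat) (b l) x) /\ a (l-1)%nat < b l) /\
  (forall l, (1 <= l <= 2*n-3)%nat -> a l mod Z.of_nat n = b l mod Z.of_nat n) /\
  (forall x, pos n r x 1 = lam (Z.of_nat n) x).

Lemma pos_last n r x : pos n r x (S (2*n-2)) = x.
Proof. unfold pos. replace (2*n-2+1 - S(2*n-2))%nat with 0%nat by lia. reflexivity. Qed.

Lemma pos_step n r x l : (1 <= l <= 2*n-2)%nat -> pos n r x l = r l (pos n r x (S l)).
Proof. unfold pos; intros. replace (2*n-2+1-l)%nat with (S (2*n-2+1 - S l)) by lia. reflexivity. Qed.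

Lemma step_refl n r a b x l : Hyp n r a b -> (1 <= l <= 2*n-2)%nat ->
  pos n r x l = refl (Z.of_nat n) (a (l-1)%nat) (b l) (pos n r x (S l)).
Proof. intros [_ [H _]] Hl. rewrite pos_step by exact Hl. apply (H l Hl). Qed.

Lemma zq n r a b : Hyp n r a b -> forall l, (1 <= l <= 2*n-2)%nat ->
  pos n r (b (2*n-2)%nat) (S l) mod Z.of_nat n = b l mod Z.of_nat n.
Proof.
  intros HH. apply desc_ind.
  - rewrite pos_last. reflexivity.
  - intros l Hl IH. rewrite (step_refl n r a b) by (exact HH || lia).
    replace (S l - 1)%nat with l by lia.
    destruct HH as [Hn [H1 [H2 _]]].
    destruct (H1 (S l) ltac:(lia)) as [Hab _]. replace (S l - 1)%nat with l in Hab by lia.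
    rewrite refl_c2; [| congruence | exact IH].
    rewrite mod_shift by exact IH. apply H2. lia.
Qed.

Lemma zdec n r a b : Hyp n r a b -> forall l, (1 <= l <= 2*n-2)%nat ->
  pos n r (b (2*n-2)%nat) l < pos n r (b (2*n-2)%nat) (S l).
Proof.
  intros HH l Hl. pose proof (zq n r a b HH l Hl) as Q.
  rewrite (step_refl n r a b) by assumption.
  destruct HH as [Hn [H1 _]]. destruct (H1 l Hl) as [Hab [_ Hlt]].
  rewrite refl_c2; [lia | congruence | exact Q].
Qed.

Lemma z0mod n r a b : Hyp n r a b -> b (2*n-2)%nat mod Z.of_nat n = 0.
Proof.
  intros HH.
  assert (A : forall l, (1 <= l <= 2*n-2)%nat -> pos n r (b (2*n-2)%nat) l < b (2*n-2)%nat).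
  { apply desc_ind.
    - pose proof (zdec n r a b HH (2*n-2)%nat) as D. rewrite pos_last in D.
      destruct HH as [Hn _]. apply D. lia.
    - intros l Hl IH. pose proof (zdec n r a b HH l ltac:(lia)). lia. }
  pose proof HH as [Hn [_ [_ Hlam]]].
  specialize (A 1%nat ltac:(lia)). rewrite Hlam in A. unfold lam in A.
  destruct (Z.eqb_spec (b (2*n-2)%nat mod Z.of_nat n) 0); [assumption|lia].
Qed.

Lemma sep n r a b : Hyp n r a b -> forall x y, x mod Z.of_nat n <> y mod Z.of_nat n ->
  forall l, (1 <= l <= S (2*n-2))%nat -> pos n r x l mod Z.of_nat n <> pos n r y l mod Z.of_nat n.
Proof.
  intros HH x y Hxy. apply desc_ind.
  - rewrite !pos_last. exact Hxy.
  - intros l Hl IH. rewrite (step_refl n r a b x) by (exact HH || lia).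
    rewrite (step_refl n r a b y) by (exact HH || lia).
    apply refl_inj; [|exact IH]. destruct HH as [_ [H1 _]]. apply (H1 l). lia.
Qed.

Lemma goodstep n r a b x l : Hyp n r a b -> x mod Z.of_nat n <> 0 -> (1 <= l <= 2*n-2)%nat ->
  (pos n r x (S l) mod Z.of_nat n = a (l-1)%nat mod Z.of_nat n /\
   pos n r x l = pos n r x (S l) + (b l - a (l-1)%nat) /\
   pos n r x l mod Z.of_nat n = b l mod Z.of_nat n) \/ pos n r x l = pos n r x (S l).
Proof.
  intros HH Hx Hl.
  assert (Hs : pos n r x (S l) mod Z.of_nat n <> b l mod Z.of_nat n).
  { rewrite <- (zq n r a b HH l Hl). apply (sep n r a b HH). rewrite (z0mod n r a b HH). exact Hx. lia. }
  rewrite (step_refl n r a b x l HH Hl).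
  destruct (Z.eq_dec (pos n r x (S l) mod Z.of_nat n) (a (l-1)%nat mod Z.of_nat n)) as [E|E].
  - left. rewrite refl_c1 by exact E. split; [exact E|]. split; [reflexivity|]. apply mod_shift; exact E.
  - right. apply refl_c3; assumption.
Qed.

Lemma good_ge n r a b x l : Hyp n r a b -> x mod Z.of_nat n <> 0 -> (1 <= l <= 2*n-2)%nat ->
  pos n r x l >= pos n r x (S l).
Proof. intros HH Hx Hl. pose proof HH as [_ [H1 _]]. destruct (H1 l Hl) as [_ [_ Hlt]].
  destruct (goodstep n r a b x l HH Hx Hl) as [[_ [E _]]|E]; lia. Qed.

Lemma good_noinc n r a b x l : Hyp n r a b -> x mod Z.of_nat n <> 0 -> (1 <= l <= 2*n-2)%nat ->
  ~ pos n r x l > pos n r x (S l) -> pos n r x l = pos n r x (S l).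
Proof. intros HH Hx Hl N. pose proof (good_ge n r a b x l HH Hx Hl). lia. Qed.

Lemma good_inc n r a b x l : Hyp n r a b -> x mod Z.of_nat n <> 0 -> (1 <= l <= 2*n-2)%nat ->
  pos n r x l > pos n r x (S l) ->
  pos n r x (S l) mod Z.of_nat n = a (l-1)%nat mod Z.of_nat n /\
   pos n r x l = pos n r x (S l) + (b l - a (l-1)%nat) /\
   pos n r x l mod Z.of_nat n = b l mod Z.of_nat n.
Proof. intros HH Hx Hl G. destruct (goodstep n r a b x l HH Hx Hl) as [E|E]; [exact E|lia]. Qed.

Lemma no_inc_const n r a b x : Hyp n r a b -> x mod Z.of_nat n <> 0 ->
  forall lo hi, (1 <= lo)%nat -> (hi <= 2*n-2)%nat -> (lo <= S hi)%nat ->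
  (forall l, (lo <= l <= hi)%nat -> ~ pos n r x l > pos n r x (S l)) ->
  pos n r x lo = pos n r x (S hi).
Proof.
  intros HH Hx lo hi H1 H2 H3 Hno. remember (S hi - lo)%nat as t eqn:Ht.
  revert lo H1 H3 Hno Ht. induction t; intros lo H1 H3 Hno Ht.
  - replace lo with (S hi) by lia. reflexivity.
  - rewrite (good_noinc n r a b x lo HH Hx) by (lia || (apply Hno; lia)).
    apply IHt; try lia. intros l Hl. apply Hno; lia.
Qed.
Lemma mod_plusN a N : (a + N) mod N = a mod N.
Proof. replace (a + N) with (a + 1 * N) by ring. apply Z_mod_plus_full. Qed.

Lemma two_incs n r a b k : Hyp n r a b -> 1 <= k <= Z.of_nat n - 1 ->
  exists L' L, (1 <= L' < L)%nat /\ (L <= 2*n-2)%nat /\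
    pos n r k L' > pos n r k (S L') /\ pos n r k L > pos n r k (S L) /\
    (forall l, (L < l <= 2*n-2)%nat -> ~ pos n r k l > pos n r k (S l)) /\
    (forall l, (L' < l < L)%nat -> ~ pos n r k l > pos n r k (S l)) /\
    pos n r k (S L) = k /\
    pos n r k L = k + (b L - a (L-1)%nat) /\
    k mod Z.of_nat n = a (L-1)%nat mod Z.of_nat n /\
    (k + (b L - a (L-1)%nat)) mod Z.of_nat n = b L mod Z.of_nat n /\
    pos n r k (S L') = k + (b L - a (L-1)%nat) /\
    (k + (b L - a (L-1)%nat)) mod Z.of_nat n = a (L'-1)%nat mod Z.of_nat n /\
    pos n r k L' = k + (b L - a (L-1)%nat) + (b L' - a (L'-1)%nat) /\
    pos n r k L' mod Z.of_nat n = b L' mod Z.of_nat n.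
Proof.
  intros HH Hk. pose proof HH as [Hn [H1 [H2 Hlam]]].
  assert (Hkm : k mod Z.of_nat n = k) by (apply Z.mod_small; lia).
  assert (Hk0 : k mod Z.of_nat n <> 0) by lia.
  assert (Hl1 : pos n r k 1 = k + Z.of_nat n).
  { rewrite Hlam. unfold lam. destruct (Z.eqb_spec (k mod Z.of_nat n) 0); [lia|reflexivity]. }
  assert (Ex1 : exists l, (1 <= l <= 2*n-2)%nat /\ pos n r k l > pos n r k (S l)).
  { destruct (classic (exists l, (1 <= l <= 2*n-2)%nat /\ pos n r k l > pos n r k (S l))) as [E|E];
      [exact E|exfalso].
    assert (pos n r k 1 = pos n r k (S (2*n-2))).
    { apply (no_inc_const n r a b k HH Hk0); try lia. intros l Hl G. apply E. exists l. split; [lia|exact G]. }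
    rewrite pos_last in H. lia. }
  destruct (find_last _ _ Ex1) as [L [HL [IL NL]]].
  assert (HSL : pos n r k (S L) = k).
  { transitivity (pos n r k (S (2*n-2))); [|apply pos_last].
    apply (no_inc_const n r a b k HH Hk0); try lia. intros l Hl. apply NL; lia. }
  destruct (good_inc n r a b k L HH Hk0 HL IL) as [EL1 [EL2 EL3]].
  rewrite HSL in EL1, EL2.
  destruct (H1 L HL) as [HabL [_ HltL]].
  assert (Ex2 : exists l, (1 <= l <= L-1)%nat /\ pos n r k l > pos n r k (S l)).
  { destruct (classic (exists l, (1 <= l <= L-1)%nat /\ pos n r k l > pos n r k (S l))) as [E|E];
      [exact E|exfalso].
    assert (pos n r k 1 = pos n r k (S (L-1))).
    { apply (no_inc_const n r a b k HH Hk0); try lia. intros l Hl G. apply E. exists l. split; [lia|exact G]. }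
    replace (S (L-1)) with L in H by lia. rewrite Hl1, EL2 in H.
    apply HabL. assert (b L = a (L-1)%nat + Z.of_nat n) by lia. rewrite H0, mod_plusN. reflexivity. }
  destruct (find_last _ _ Ex2) as [L' [HL' [IL' NL']]].
  assert (HSL' : pos n r k (S L') = pos n r k L).
  { transitivity (pos n r k (S (L-1))); [|f_equal; lia]. apply (no_inc_const n r a b k HH Hk0); try lia.
    intros l Hl. apply NL'; lia. }
  destruct (good_inc n r a b k L' HH Hk0 ltac:(lia) IL') as [EL1' [EL2' EL3']].
  rewrite HSL', EL2 in EL1', EL2'.
  exists L', L. split; [lia|]. split; [lia|]. split; [exact IL'|]. split; [exact IL|].
  split; [exact NL|]. split; [intros l Hl; apply NL'; lia|].
  split; [exact HSL|]. split; [exact EL2|]. split; [exact EL1|].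
  split; [rewrite <- EL2; exact EL3|]. split; [rewrite HSL'; exact EL2|].
  split; [exact EL1'|]. split; [exact EL2'|exact EL3'].
Qed.
Lemma mod_minusN a N : (a - N) mod N = a mod N.
Proof. replace (a - N) with (a + (-1) * N) by ring. apply Z_mod_plus_full. Qed.

Theorem corollary3p6 (n : nat) (r : nat -> Z -> Z) (k : Z) :
  (2 <= n)%nat ->
  is_fact_lam n r ->
  tree_like n r ->
  1 <= k <= Z.of_nat n - 1 ->
  exists l1 l2 : nat,
    (1 <= l1 < l2)%nat /\ (l2 <= 2 * n - 2)%nat /\
    (* l1 is the first, l2 the last, reflection with an endpoint = k mod n *)
    has_endpoint (Z.of_nat n) (r l1) k /\
    has_endpoint (Z.of_nat n) (r l2) k /\
    (forall l, (1 <= l <= 2 * n - 2)%nat ->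
       has_endpoint (Z.of_nat n) (r l) k -> (l1 <= l <= l2)%nat) /\
    (* exactly these two reflections increase k *)
    (forall l, (1 <= l <= 2 * n - 2)%nat ->
       (increases n r l k <-> l = l1 \/ l = l2)) /\
    exists bk : Z,
      bk mod Z.of_nat n <> k mod Z.of_nat n /\
      (bk > k ->
         is_refl_ij (Z.of_nat n) (r l1) (bk - Z.of_nat n) k /\
         is_refl_ij (Z.of_nat n) (r l2) k bk) /\
      (bk < k ->
         is_refl_ij (Z.of_nat n) (r l1) bk k /\
         is_refl_ij (Z.of_nat n) (r l2) (k - Z.of_nat n) bk).
Proof.
  intros Hn [Hrefl Hprod] [a [b [Ha Hc]]] Hk.
  assert (HH : Hyp n r a b).
  { split; [exact Hn|]. split.
    - intros l Hl. destruct (Ha l Hl) as [[Hne Hf] Hlt]. split; [exact Hne|]. split; [exact Hf|exact Hlt].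
    - split; [exact Hc|]. intros x. unfold pos. replace (2*n-2+1-1)%nat with (2*n-2)%nat by lia. apply Hprod. }
  assert (Hinc : forall l x, (1 <= l <= 2*n-2)%nat ->
            (increases n r l x <-> pos n r x l > pos n r x (S l))).
  { intros l x Hl. unfold increases, pos. replace (2*n-2+1 - S l)%nat with (2*n-2-l)%nat by lia. reflexivity. }
  set (kn := Z.to_nat k).
  assert (Ek : k = Z.of_nat kn) by (unfold kn; rewrite Z2Nat.id; lia).
  clearbody kn. subst k.
  destruct (two_incs n r a b (Z.of_nat kn) HH Hk) as
    [L' [L [HLL [HLm [IL' [IL [NL [NLL [HSL [EL2 [EL1 [EL3 [HSL' [EL1' [EL2' EL3']]]]]]]]]]]]]]].
  assert (Hkm : Z.of_nat kn mod Z.of_nat n = Z.of_nat kn) by (apply Z.mod_small; lia).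
  assert (Hk0 : Z.of_nat kn mod Z.of_nat n <> 0) by lia.
  assert (Only : forall l, (1 <= l <= 2*n-2)%nat -> pos n r (Z.of_nat kn) l > pos n r (Z.of_nat kn) (S l) ->
                 l = L' \/ l = L).
  { intros l Hl Il.
    apply (pigeon (n-1) (2*n-2) (fun k l => (1 <= l <= 2*n-2)%nat /\
               pos n r (Z.of_nat k) l > pos n r (Z.of_nat k) (S l))) with (k := kn).
    - lia.
    - intros k1 k2 l0 Hk1 Hk2 [Hl0 I1] [_ I2].
      destruct (Nat.eq_dec k1 k2) as [|Ne]; [assumption|exfalso].
      assert (m1 : Z.of_nat k1 mod Z.of_nat n = Z.of_nat k1) by (apply Z.mod_small; lia).
      assert (m2 : Z.of_nat k2 mod Z.of_nat n = Z.of_nat k2) by (apply Z.mod_small; lia).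
      destruct (good_inc n r a b (Z.of_nat k1) l0 HH ltac:(lia) Hl0 I1) as [A1 _].
      destruct (good_inc n r a b (Z.of_nat k2) l0 HH ltac:(lia) Hl0 I2) as [A2 _].
      apply (sep n r a b HH (Z.of_nat k1) (Z.of_nat k2)) with (l := S l0); [lia | lia | congruence].
    - intros k0 l0 [H _]. exact H.
    - intros k0 Hk0'. destruct (two_incs n r a b (Z.of_nat k0) HH ltac:(lia)) as
        [u [v [Huv [Hv [Iu [Iv _]]]]]].
      exists u, v. split; [lia|]. split; split; (lia || assumption).
    - lia.
    - split; [lia|exact IL'].
    - split; [lia|exact IL].
    - split; [lia|exact Il].
    - lia. }
  pose proof HH as [_ [H1 [_ Hlam]]].
  assert (Hl1 : pos n r (Z.of_nat kn) 1 = Z.of_nat kn + Z.of_nat n).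
  { rewrite Hlam. unfold lam. destruct (Z.eqb_spec (Z.of_nat kn mod Z.of_nat n) 0); [lia|reflexivity]. }
  assert (HL1 : pos n r (Z.of_nat kn) 1 = pos n r (Z.of_nat kn) L').
  { transitivity (pos n r (Z.of_nat kn) (S (L'-1))); [|f_equal; lia].
    apply (no_inc_const n r a b _ HH Hk0); try lia.
    intros l Hl Il. destruct (Only l ltac:(lia) Il); lia. }
  destruct (H1 L ltac:(lia)) as [HabL [HfL HltL]].
  destruct (H1 L' ltac:(lia)) as [HabL' [HfL' HltL']].
  set (k := Z.of_nat kn) in *.
  set (N := Z.of_nat n) in *.
  set (bk := k + (b L - a (L-1)%nat)) in *.
  assert (Hsum : (b L - a (L - 1)%nat) + (b L' - a (L' - 1)%nat) = N) by lia.
  assert (Hbk : bk mod N <> k mod N).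
  { rewrite EL3, EL1. intro E. apply HabL. symmetry. exact E. }
  assert (R1 : is_refl_ij N (r L') (bk - N) k).
  { split.
    - rewrite mod_minusN. exact Hbk.
    - intros x. rewrite HfL'. apply refl_congr.
      + rewrite mod_minusN. symmetry. exact EL1'.
      + rewrite <- EL3'. rewrite <- HL1, Hl1. apply mod_plusN.
      + unfold bk. lia. }
  assert (R2 : is_refl_ij N (r L) k bk).
  { split.
    - intro E. apply Hbk. symmetry. exact E.
    - intros x. rewrite HfL. apply refl_congr.
      + symmetry. exact EL1.
      + symmetry. exact EL3.
      + unfold bk. lia. }
  exists L', L. split; [lia|]. split; [lia|].
  split; [exists (bk - N), k; split; [exact R1|right; reflexivity]|].
  split; [exists k, bk; split; [exact R2|left; reflexivity]|].
  split.
  { intros l Hl He.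
    destruct (le_lt_dec L' l) as [A|A]; destruct (le_lt_dec l L) as [B|B]; try lia; exfalso.
    - (* l > L *)
      assert (Hy : pos n r k (S l) = k).
      { transitivity (pos n r k (S (2*n-2))); [|apply pos_last].
        apply (no_inc_const n r a b _ HH Hk0); try lia.
        intros l0 Hl0. apply NL; lia. }
      assert (Mv : pos n r k l <> pos n r k (S l)).
      { rewrite (pos_step n r k l Hl). apply (endpoint_moves N (r l) k). exact He. rewrite Hy. reflexivity. }
      pose proof (good_ge n r a b k l HH Hk0 Hl).
      apply (NL l); lia.
    - (* l < L' *)
      assert (Hy : pos n r k (S l) = k + N).
      { rewrite <- Hl1, HL1. transitivity (pos n r k (S (L'-1))); [|f_equal; lia].
        apply (no_inc_const n r a b _ HH Hk0); try lia.
        intros l0 Hl0 Il. destruct (Only l0 ltac:(lia) Il); lia. }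
      assert (Mv : pos n r k l <> pos n r k (S l)).
      { rewrite (pos_step n r k l Hl). apply (endpoint_moves N (r l) k). exact He. rewrite Hy. apply mod_plusN. }
      pose proof (good_ge n r a b k l HH Hk0 Hl).
      destruct (Only l Hl ltac:(lia)); lia. }
  split.
  { intros l Hl. rewrite (Hinc l k Hl). split; [apply Only; exact Hl|].
    intros [-> | ->]; assumption. }
  exists bk. split; [exact Hbk|]. split; [intros _; split; assumption|].
  intros Hlt. unfold bk in Hlt. lia.
Qed.
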